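(* For any $k \ge 2$, \[ O(k, 2k-2) = \frac{C_{k-1} + C_{(k-2)/2}}{2}, \] where $C_n = \frac{1}{n+1}\binom{2n}{n}$ for integers $n\ge 0$ and $C_n = 0$ if $n$ is not an integer. Moreover, $O(k, 2k-3) = 2E(k, 2k-2)$.
   Context: For a binary word $w = w_1\cdots w_n$, let $A = \{i : w_i = 0\}$, $|A|=a$; $G(w)$ is the permutation of $[n]$ whose first $a$ entries are the elements of $A$ in increasing order followed by the elements of $[n]\setminus A$ in increasing order. $w$ is called odd (resp. even) if $G(w)$ has an odd (resp. even) number of inversions. For $k\ge1$, $m\ge0$, $\mathcal{B}(k,m)$ is the set of binary words of length $m$ that avoid (do not contain as a not-necessarily-contiguous subsequence) every word $0^j1^{k-j}$, $j\in\{0,\dots,k\}$; $O(k,m)$ and $E(k,m)$ are the numbers of odd and even words in $\mathcal{B}(k,m)$ respectively. *)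

(* Defs.v *)
From mathcomp Require Import all_boot all_order all_algebra.
Set Implicit Arguments. Unset Strict Implicit. Unset Printing Implicit Defensive.
Import GRing.Theory Num.Theory.

(* Binary words: letters are bool, with 0 encoded as false and 1 as true. *)

Definition forb (k j : nat) : seq bool := nseq j false ++ nseq (k - j) true.

Definition avoids_all (k : nat) (w : seq bool) : bool :=
  [forall j : 'I_k.+1, ~~ subseq (forb k j) w].

(* G(w) as a sequence (one-line notation of a permutation of [n] = {1..n}):
   positions of 0's in increasing order followed by positions of 1's. *)
Definition Gperm (w : seq bool) : seq nat :=
  [seq i <- iota 1 (size w) | nth false w i.-1 == false] ++
  [seq i <- iota 1 (size w) | nth false w i.-1 == true].

Definition inversions (s : seq nat) : nat :=
  #|[set pq : 'I_(size s) * 'I_(size s) |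
       (pq.1 < pq.2)%N && (nth 0 s pq.2 < nth 0 s pq.1)%N]|.

Definition odd_word (w : seq bool) : bool := odd (inversions (Gperm w)).

Definition Ocount (k m : nat) : nat :=
  #|[set w : m.-tuple bool | avoids_all k w && odd_word w]|.
Definition Ecount (k m : nat) : nat :=
  #|[set w : m.-tuple bool | avoids_all k w && ~~ odd_word w]|.

Definition catalan (n : nat) : rat := ('C(n.*2, n))%:R / (n.+1)%:R.

(* C_{(k-2)/2}: zero when (k-2)/2 is not an integer, i.e. when k is odd. *)
Definition catalan_half_km2 (k : nat) : rat :=
  if odd k then 0%R else catalan ((k - 2)./2).

(* Main.v *)
Require Import Defs.
From mathcomp Require Import all_boot all_order all_algebra zify ring.
Import GRing.Theory Num.Theory.
Set Implicit Arguments. Unset Strict Implicit. Unset Printing Implicit Defensive.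

Definition c1 (w : seq bool) := count id w.
Definition c0 (w : seq bool) := count negb w.

Lemma sub_ntrue l w : subseq (nseq l true) w = (l <= c1 w).
Proof.
elim: w l => [|y w IH] [|l] //=.
case: y => /=; first by rewrite IH add1n.
by rewrite -[true :: nseq l true]/(nseq l.+1 true) IH add0n.
Qed.

Lemma sub_nfalse j s w :
  subseq (nseq j false ++ s) w <->
  exists t, j <= c0 (take t w) /\ subseq s (drop t w).
Proof.
elim: w j => [|y w IH] j.
  split.
    rewrite subseq0; case: j => [|j] //= /eqP ->. by exists 0.
  case=> t [Hj Hs]; move: Hj Hs; rewrite /c0 /= leqn0 => /eqP -> /=.
  by [].
case: j => [|j].
  split; first by move=> H; exists 0; rewrite drop0; split.
  case=> t [_ Hs]; apply: subseq_trans Hs _; exact: drop_subseq.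
case: y => /=.
  apply: (iff_trans (IH j.+1)); split.
    by case=> t [Hj Hs]; exists t.+1; rewrite /c0 /= add0n.
  by case=> [[|t]] [Hj Hs] //; exists t.
apply: (iff_trans (IH j)); split.
  by case=> t [Hj Hs]; exists t.+1; rewrite /c0 /= add1n.
by case=> [[|t]] [Hj Hs] //; exists t; move: Hj; rewrite /c0 /= add1n.
Qed.

Lemma avoidsP k w : avoids_all k w <-> forall t, c0 (take t w) + c1 (drop t w) < k.
Proof.
split.
  move=> /forallP H t; rewrite ltnNge; apply/negP => Hk.
  have Hj : minn k (c0 (take t w)) < k.+1 by rewrite ltnS geq_minl.
  move: (H (Ordinal Hj)); rewrite /forb /= => /negP; apply.
  apply/sub_nfalse; exists t; split; first exact: geq_minr.
  rewrite sub_ntrue; set a := c0 _ in Hk *; set b := c1 _ in Hk *; lia.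
move=> H; apply/forallP => j; apply/negP; rewrite /forb => /sub_nfalse [t [Hj Hs]].
move: Hs; rewrite sub_ntrue => Hs.
have Ht := H t; have Hjk := ltn_ord j; move: Hj Hs Ht Hjk; set a := c0 _; set b := c1 _; lia.
Qed.

Fixpoint ballot (d : nat) (w : seq bool) : bool :=
  match w with
  | [::] => true
  | b :: w' => if b then ballot d.+1 w' else (0 < d) && ballot d.-1 w'
  end.

Lemma ballotP d w : ballot d w <-> forall t, c0 (take t w) <= c1 (take t w) + d.
Proof.
elim: w d => [|b w IH] d /=; first by split=> // t.
case: b.
  apply: (iff_trans (IH d.+1)); split.
    move=> H [|t] //=; have := H t; rewrite /c0 /c1 /=; lia.
  move=> H t; have := H t.+1; rewrite /c0 /c1 /=; lia.
split.
  move=> /andP [Hd /IH H] [|t] //=; have := H t; rewrite /c0 /c1 /=; lia.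
move=> H; apply/andP; split.
  by have := H 1; rewrite /c0 /c1 /= take0 /=; lia.
apply/IH => t; have := H t.+1; have := H 1; rewrite /c0 /c1 /= take0 /=; lia.
Qed.

Lemma ballot_rcons d w b :
  ballot d (rcons w b) = ballot d w && (c0 (rcons w b) <= c1 (rcons w b) + d).
Proof.
elim: w d => [|x w IH] d /=; first by case: b; case: d.
case: x => /=; rewrite IH /c0 /c1 /=.
  by congr (_ && _); apply/idP/idP; lia.
case: d => [|d] //=; congr (_ && _); apply/idP/idP; lia.
Qed.

Lemma c1_takedrop t w : c1 w = c1 (take t w) + c1 (drop t w).
Proof. by rewrite /c1 -count_cat cat_take_drop. Qed.

Lemma avoids_ballot k d w : c1 w + d + 1 = k -> (avoids_all k w <-> ballot d w).
Proof.
move=> Hk; apply: (iff_trans (avoidsP k w)); apply: iff_sym.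
apply: (iff_trans (ballotP d w)); split=> H t; have := H t;
  have := c1_takedrop t w; set a := c1 (take t w); set b := c1 (drop t w);
  set c := c0 _; lia.
Qed.

Lemma avoids_bounds k w : avoids_all k w -> c1 w < k /\ c0 w < k.
Proof.
move/avoidsP => H; split; first by have := H 0; rewrite take0 drop0.
by have := H (size w); rewrite take_size drop_size /c1 /= addn0.
Qed.

Fixpoint winv (w : seq bool) : nat :=
  match w with [::] => 0 | b :: w' => (if b then c0 w' else 0) + winv w' end.

Lemma winv_rcons w b : winv (rcons w b) = winv w + (if b then 0 else c1 w).
Proof.
elim: w => [|x w IH] /=; first by case: b.
rewrite IH /c0 /c1 -!cats1 !count_cat; case: x; move: IH; case: b => /= _; lia.
Qed.

Fixpoint invr (s : seq nat) : nat :=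
  match s with [::] => 0 | x :: s' => count (fun y => y < x) s' + invr s' end.

Lemma sum_count (P : pred nat) s : \sum_(j < size s) P (nth 0 s j) = count P s.
Proof.
elim: s => [|x s IH]; first by rewrite big_ord0.
by rewrite /= big_ord_recl /= IH.
Qed.

Lemma inversionsE s : inversions s =
  \sum_(i < size s) \sum_(j < size s) ((i < j) && (nth 0 s j < nth 0 s i)).
Proof.
rewrite /inversions -sum1_card pair_bigA /= big_mkcond /=.
apply: eq_bigr => [[i j]] _; rewrite inE /=; by case: ifP.
Qed.

Lemma inversions_cons x s : inversions (x :: s) = count (fun y => y < x) s + inversions s.
Proof.
rewrite !inversionsE /= big_ord_recl /= big_ord_recl /= add0n.
rewrite -sum_count; congr (_ + _).
apply: eq_bigr => i _; rewrite big_ord_recl /=; by [].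
Qed.

Lemma inversions_invr s : inversions s = invr s.
Proof.
elim: s => [|x s IH]; first by rewrite inversionsE big_ord0.
by rewrite inversions_cons IH.
Qed.

Fixpoint cross (a b : seq nat) : nat :=
  match a with [::] => 0 | x :: a' => count (fun y => y < x) b + cross a' b end.

Lemma invr_cat a b : invr (a ++ b) = invr a + invr b + cross a b.
Proof. elim: a => [|x a IH] /=; first lia; rewrite IH count_cat; lia. Qed.

Lemma cross_cons a y b : cross a (y :: b) = count (fun x => y < x) a + cross a b.
Proof. elim: a => [|x a IH] /=; first lia; rewrite IH; case: (y < x); lia. Qed.

Lemma cross_rcons a y b : cross a (rcons b y) = count (fun x => y < x) a + cross a b.
Proof.
elim: a => [|x a IH] /=; first lia; rewrite IH -cats1 count_cat /=; case: (y < x); lia.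
Qed.

Lemma invr_rcons b y : invr (rcons b y) = invr b + count (fun x => y < x) b.
Proof.
elim: b => [|x b IH] /=; first lia; rewrite IH -cats1 count_cat /=; case: (y < x); lia.
Qed.

Lemma count_lt_all (P : pred nat) s : all P s -> count P s = size s.
Proof. by rewrite all_count => /eqP. Qed.

Lemma count_none (P : pred nat) s : all (predC P) s -> count P s = 0.
Proof. by move=> H; apply/eqP; rewrite -leqn0 leqNgt -has_count -all_predC. Qed.

Definition Zs (w : seq bool) := [seq i <- iota 1 (size w) | nth false w i.-1 == false].
Definition Os (w : seq bool) := [seq i <- iota 1 (size w) | nth false w i.-1 == true].

Lemma iota_rcons1 m : iota 1 m.+1 = rcons (iota 1 m) m.+1.
Proof. by rewrite -cats1 -{1}(addn1 m) iotaD add1n. Qed.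

Lemma filt_rcons (w : seq bool) b c :
  [seq i <- iota 1 (size (rcons w b)) | nth false (rcons w b) i.-1 == c] =
  [seq i <- iota 1 (size w) | nth false w i.-1 == c] ++
  (if b == c then [:: (size w).+1] else [::]).
Proof.
rewrite size_rcons iota_rcons1 -(cats1 (iota 1 _)) filter_cat /=.
rewrite nth_rcons ltnn eqxx; congr (_ ++ _).
apply: eq_in_filter => i; rewrite mem_iota => /andP [H1 H2].
by rewrite nth_rcons; have -> : i.-1 < size w by lia.
Qed.

Lemma filt_bound (w : seq bool) c :
  all (fun i => i <= size w) [seq i <- iota 1 (size w) | nth false w i.-1 == c].
Proof.
apply/allP => i; rewrite mem_filter mem_iota => /andP [_ /andP [_ H]]; lia.
Qed.

Lemma size_Os w : size (Os w) = c1 w.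
Proof.
elim/last_ind: w => [|w b IH] //.
rewrite /Os filt_rcons size_cat -/(Os w) IH /c1 -cats1 count_cat /=.
by case: b.
Qed.

Lemma Gperm_winv w : inversions (Gperm w) = winv w.
Proof.
elim/last_ind: w => [|w b IH]; first by rewrite inversions_invr.
move: IH; rewrite /Gperm !filt_rcons !inversions_invr winv_rcons => IH.
have HZ := filt_bound w false; have HO := filt_bound w true.
have HS := size_Os w; rewrite /Os in HS.
set Z := [seq i <- _ | _ == false] in IH HZ *.
set O := [seq i <- _ | _ == true] in IH HO HS *.
rewrite invr_cat in IH.
have H1 : all (predC (fun x => (size w).+1 < x)) Z.
  by apply: sub_all HZ => i /=; rewrite -leqNgt => /leqW.
have H2 : all (predC (fun x => (size w).+1 < x)) O.
  by apply: sub_all HO => i /=; rewrite -leqNgt => /leqW.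
have H3 : all (fun x => x < (size w).+1) O.
  by apply: sub_all HO => i /=; rewrite ltnS.
case: b => /=.
  rewrite cats0 cats1 !invr_cat invr_rcons cross_rcons (count_none H1) (count_none H2); lia.
rewrite cats0 -catA cat1s invr_cat /= cross_cons (count_none H1) (count_lt_all H3).
lia.
Qed.

Lemma odd_wordE w : odd_word w = odd (winv w).
Proof. by rewrite /odd_word Gperm_winv. Qed.

Fixpoint W (m : nat) : seq (seq bool) :=
  if m is m'.+1 then [seq true :: w | w <- W m'] ++ [seq false :: w | w <- W m']
  else [:: [::]].

Lemma W_count_cons (P : pred (seq bool)) m :
  count P (W m.+1) = count (fun w => P (true :: w)) (W m) + count (fun w => P (false :: w)) (W m).
Proof. by rewrite /= count_cat !count_map. Qed.

Lemma W_count_rcons m (P : pred (seq bool)) :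
  count P (W m.+1) = count (fun w => P (rcons w true)) (W m) + count (fun w => P (rcons w false)) (W m).
Proof.
elim: m P => [|m IH] P; first by rewrite /= !addn0.
rewrite (W_count_cons P) (W_count_cons (fun w => P (rcons w true))) (W_count_cons (fun w => P (rcons w false))) !IH /=.
lia.
Qed.

Lemma memW m w : (w \in W m) = (size w == m).
Proof.
elim: m w => [|m IH] w /=; first by case: w.
rewrite mem_cat; case: w => [|b w] //=.
  by apply/negbTE/negP => /orP [] /mapP [].
rewrite eqSS -IH; case: b.
  rewrite mem_map; last by move=> x y [].
  by case: (w \in W m) => //=; apply/negbTE/negP => /mapP [].
rewrite (mem_map (f := cons false)); last by move=> x y [].
by rewrite orbC; case: (w \in W m) => //=; apply/negbTE/negP => /mapP [].
Qed.

Lemma uniqW m : uniq (W m).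
Proof.
elim: m => [|m IH] //=; rewrite cat_uniq !map_inj_uniq //; last 2 first.
- by move=> x y [].
- by move=> x y [].
rewrite IH andbT; apply/hasPn => x /mapP [y _ ->]; apply/negP => /mapP [z _] /eqP; by rewrite eqseq_cons => /andP [].
Qed.

Lemma card_tuple (P : pred (seq bool)) m :
  #|[set w : m.-tuple bool | P w]| = count P (W m).
Proof.
rewrite cardE size_filter -enumT.
rewrite (@eq_count _ _ (preim val P)); last by move=> w /=; rewrite in_set.
rewrite -(count_map val P); apply: (fun H => (elimT permP H) P); apply: uniq_perm.
- by rewrite map_inj_uniq ?enum_uniq //; exact: val_inj.
- exact: uniqW.
move=> w; rewrite memW; apply/mapP/idP.
  by case=> t _ ->; rewrite size_tuple.
by move=> /eqP H; exists (Tuple (introT eqP H)); rewrite ?mem_enum.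
Qed.

Lemma c1_rcons w b : c1 (rcons w b) = c1 w + b.
Proof. by rewrite /c1 -cats1 count_cat /=; case: b. Qed.
Lemma c0_rcons w b : c0 (rcons w b) = c0 w + ~~ b.
Proof. by rewrite /c0 -cats1 count_cat /=; case: b. Qed.
Lemma size_c w : size w = c1 w + c0 w.
Proof. by elim: w => [|[] w IH] //=; rewrite /c1 /c0 /= -/(c1 w) -/(c0 w) IH; lia. Qed.

Definition Gc d p q b :=
  count (fun w => [&& c1 w == p, c0 w == q, ballot d w & odd (winv w) == b]) (W (p + q)).

Lemma count_condl (T : eqType) (c : bool) (a : pred T) s :
  count (fun x => c && a x) s = c * count a s.
Proof. by case: c; rewrite ?mul1n ?mul0n ?count_pred0 //; apply: eq_count. Qed.

Lemma Gc_rec d p q b : 0 < p + q ->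
  Gc d p q b = (q <= p + d) * ((if p is p'.+1 then Gc d p' q b else 0) +
                               (if q is q'.+1 then Gc d p q' (b (+) odd p) else 0)).
Proof.
move=> Hpq; have [m Hm] : exists m, p + q = m.+1 by exists (p + q).-1; lia.
rewrite /Gc Hm W_count_rcons mulnDr; clear Hpq; congr (_ + _).
  case: p Hm => [|p] Hm.
    rewrite muln0; apply/eqP; rewrite -leqn0 leqNgt -has_count; apply/hasPn => w _.
    by rewrite c1_rcons addn1.
  have -> : m = p + q by lia.
  rewrite -count_condl; apply: eq_count => w.
  rewrite c1_rcons c0_rcons ballot_rcons winv_rcons c1_rcons c0_rcons /= !addn0 addn1 eqSS.
  case: (eqVneq (c1 w) p) => [->|Hp] /=; last by rewrite andbF.
  case: (eqVneq (c0 w) q) => [->|Hq] /=; last by rewrite andbF.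
  by case: (ballot d w); case: (q <= _); case: (odd _ == b).
case: q Hm => [|q] Hm.
  rewrite muln0; apply/eqP; rewrite -leqn0 leqNgt -has_count; apply/hasPn => w _.
  by rewrite c0_rcons addn1 andbF.
have -> : m = p + q by lia.
rewrite -count_condl; apply: eq_count => w.
rewrite c1_rcons c0_rcons ballot_rcons winv_rcons c1_rcons c0_rcons /= !addn0 addn1 eqSS.
case: (eqVneq (c1 w) p) => [->|Hp] /=; last by rewrite andbF.
case: (eqVneq (c0 w) q) => [->|Hq] /=; last by rewrite andbF.
rewrite oddD; case: (ballot d w); case: (q.+1 <= p + d); case: (odd (winv w)); case: (odd p); by case: b.
Qed.

Fixpoint B (a b : nat) : nat :=
  match a with
  | 0 => (b == 0)
  | a'.+1 => (fix Bb b := match b with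
                         | 0 => 1
                         | b'.+1 => if b'.+1 <= a'.+1 then B a' b'.+1 + Bb b' else 0
                         end) b
  end.

Lemma B0 a : B a 0 = 1. Proof. by case: a. Qed.
Lemma B_rec a b : B a.+1 b.+1 = (b.+1 <= a.+1) * (B a b.+1 + B a.+1 b).
Proof. by rewrite /=; case: ifP => //; rewrite mul1n. Qed.
Lemma B_small a b : a < b -> B a b = 0.
Proof.
case: a => [|a]; first by case: b.
case: b => [|b] // H; by rewrite B_rec leqNgt H.
Qed.

Lemma half_dbl a : (a.*2)./2 = a. Proof. by elim: a => //= a ->. Qed.
Lemma uphalf_dbl a : uphalf (a.*2) = a. Proof. by elim: a => //= a ->. Qed.
Lemma half_dbl1 a : (a.*2.+1)./2 = a. Proof. by elim: a => //= a ->. Qed.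
Lemma par_split n : exists a, n = a.*2 \/ n = a.*2.+1.
Proof.
exists n./2; have := odd_double_half n; case: (odd n) => /= H; [right|left]; lia.
Qed.

Local Open Scope ring_scope.

Definition Dcl (p q : nat) : int :=
  if p is 0 then (q == 0)%:R
  else if odd p then (-1) ^+ q * (B p./2 q./2)%:R
  else if odd q then 0 else (B (p./2).-1 q./2)%:R.

Lemma Dcl_0 q : Dcl 0 q = (q == 0)%:R. Proof. by []. Qed.
Lemma Dcl_o0 a c : Dcl (a.*2.+1) (c.*2) = (B a c)%:R.
Proof. by rewrite /Dcl /= odd_double /= uphalf_dbl half_dbl -signr_odd odd_double mul1r. Qed.
Lemma Dcl_o1 a c : Dcl (a.*2.+1) (c.*2.+1) = - (B a c)%:R.
Proof. by rewrite /Dcl /= odd_double /= !uphalf_dbl -signr_odd /= odd_double mulN1r. Qed.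
Lemma Dcl_e0 a c : Dcl (a.*2.+2) (c.*2) = (B a c)%:R.
Proof.
have -> : (a.*2.+2 = (a.+1).*2)%N by rewrite doubleS.
by rewrite /Dcl /= -/(double a.+1) odd_double half_dbl /= odd_double half_dbl.
Qed.
Lemma Dcl_e1 a c : Dcl (a.*2.+2) (c.*2.+1) = 0.
Proof.
have -> : (a.*2.+2 = (a.+1).*2)%N by rewrite doubleS.
by rewrite /Dcl /= -/(double a.+1) odd_double /= odd_double.
Qed.

Lemma Dcl_q0 p : Dcl p 0 = 1.
Proof. by rewrite /Dcl; case: p => // p; case: ifP => _; rewrite /= B0 ?expr0 ?mul1r. Qed.

Lemma Dcl_ev1 a c : Dcl (a.*2) (c.*2.+1) = 0.
Proof. by case: a => [|a] //; rewrite doubleS Dcl_e1. Qed.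

Lemma psplit p : p = 0%N \/ exists a, p = a.*2.+1 \/ p = a.*2.+2.
Proof.
case: (par_split p) => [[|a]] [->|->]; first by left.
- by right; exists 0%N; left.
- by right; exists a; right; rewrite doubleS.
- by right; exists a.+1; left.
Qed.

Lemma Dcl_big p q : (p < q)%N -> Dcl p q = 0.
Proof.
case: (psplit p) => [->|[a [->|->]]]; first by case: q.
- case: (par_split q) => [c [->|->]] H.
    by rewrite Dcl_o0 B_small //; move: H; rewrite -!muln2; lia.
  by rewrite Dcl_o1 B_small ?oppr0 //; move: H; rewrite -!muln2; lia.
- case: (par_split q) => [c [->|->]] H; last by rewrite Dcl_e1.
  by rewrite Dcl_e0 B_small //; move: H; rewrite -!muln2; lia.
Qed.

Lemma sign_o a : (-1) ^+ (a.*2.+1) = -1 :> int.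
Proof. by rewrite -signr_odd /= odd_double. Qed.
Lemma sign_e a : (-1) ^+ (a.*2.+2) = 1 :> int.
Proof. by rewrite -signr_odd /= odd_double. Qed.

Lemma Dcl_rec p q : (0 < p + q)%N ->
  Dcl p q = (q <= p)%:R * ((if p is p'.+1 then Dcl p' q else 0) +
                           (if q is q'.+1 then (-1) ^+ p * Dcl p q' else 0)).
Proof.
move=> Hpq; case: (leqP q p) => Hqp; last by rewrite Dcl_big // mul0r.
rewrite mul1r.
case: (psplit p) Hqp Hpq => [->|[a [->|->]]] Hqp Hpq.
- by move: Hqp Hpq; case: q.
- case: (par_split q) Hqp => [[|c] [->|->]] Hqp.
  + by rewrite double0 !Dcl_q0 addr0.
  + by rewrite Dcl_o1 Dcl_ev1 add0r sign_o double0 Dcl_q0 mulN1r B0.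
  + clear Hpq; case: a Hqp => [|a] Hqp; first by move: Hqp; rewrite -!muln2; lia.
    have -> : Dcl a.+1.*2 c.+1.*2 = (B a c.+1)%:R by rewrite doubleS Dcl_e0.
    have -> : (match c.+1.*2 with 0%N => 0 | q.+1 => (-1) ^+ a.+1.*2.+1 * Dcl a.+1.*2.+1 q end) = (-1) ^+ a.+1.*2.+1 * Dcl a.+1.*2.+1 (c.*2.+1) by rewrite doubleS.
    rewrite Dcl_o0 sign_o mulN1r Dcl_o1 opprK.
    have Hg : (c.+1 <= a.+1)%N by move: Hqp; rewrite -!muln2; lia.
    by rewrite B_rec Hg mul1n natrD.
  + by rewrite Dcl_o1 Dcl_ev1 add0r sign_o Dcl_o0 mulN1r.
- case: (par_split q) Hqp => [[|c] [->|->]] Hqp.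
  + by rewrite double0 !Dcl_q0 addr0.
  + by rewrite Dcl_e1 Dcl_o1 sign_e mul1r Dcl_e0 addNr.
  + have -> : (match c.+1.*2 with 0%N => 0 | q.+1 => (-1) ^+ a.*2.+2 * Dcl a.*2.+2 q end) = (-1) ^+ a.*2.+2 * Dcl a.*2.+2 (c.*2.+1) by rewrite doubleS.
    by rewrite Dcl_e0 Dcl_o0 sign_e mul1r Dcl_e1 addr0.
  + by rewrite Dcl_e1 Dcl_o1 sign_e mul1r Dcl_e0 addNr.
Qed.

Lemma Gc00 d b : Gc d 0 0 b = (false == b)%N.
Proof. by case: b. Qed.

Lemma GT n : forall p q, (p + q <= n)%N -> (Gc 0 p q false + Gc 0 p q true)%N = B p q.
Proof.
elim: n => [|n IH] p q Hn.
  by have [-> ->] : (p = 0 /\ q = 0)%N by lia.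
case: (posnP (p + q)) => Hpq.
  by have [-> ->] : (p = 0 /\ q = 0)%N by lia.
rewrite !Gc_rec // -mulnDr.
case: p Hn Hpq => [|p] Hn Hpq; case: q Hn Hpq => [|q] Hn Hpq; cbv beta iota => //.
- by rewrite !addn0 leq0n mul1n IH ?B0 //; lia.
- rewrite B_rec addn0; congr (_ * _)%N.
  have -> : (Gc 0 p q.+1 false + Gc 0 p.+1 q (false (+) odd p.+1) + (Gc 0 p q.+1 true + Gc 0 p.+1 q (true (+) odd p.+1)))%N
          = ((Gc 0 p q.+1 false + Gc 0 p q.+1 true) + (Gc 0 p.+1 q false + Gc 0 p.+1 q true))%N.
    by case: (odd p.+1) => /=; lia.
  by rewrite !IH //; lia.
Qed.

Lemma GD n : forall p q, (p + q <= n)%N ->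
  (Gc 0 p q false)%:R - (Gc 0 p q true)%:R = Dcl p q.
Proof.
elim: n => [|n IH] p q Hn.
  by have [-> ->] : (p = 0 /\ q = 0)%N by lia.
case: (posnP (p + q)) => Hpq.
  by have [-> ->] : (p = 0 /\ q = 0)%N by lia.
rewrite !Gc_rec // Dcl_rec //.
case: p Hn Hpq => [|p] Hn Hpq; case: q Hn Hpq => [|q] Hn Hpq; cbv beta iota => //.
- by rewrite !mul0n mul0r subrr.
- by rewrite !addn0 leq0n !mul1n mul1r addr0 IH //; lia.
- rewrite addn0; case: (leqP q.+1 p.+1) => Hg; last by rewrite !mul0n mul0r subrr.
  rewrite !mul1n mul1r !natrD.
  have H1 := IH p q.+1 ltac:(lia); have H2 := IH p.+1 q ltac:(lia).
  rewrite -H1 -H2 -signr_odd; case: (odd p.+1); rewrite /= ?expr0 ?expr1; ring.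
Qed.

Lemma B_closed a b : (b <= a.+1)%N ->
  (B a b + (if b is b'.+1 then 'C(a + b, b') else 0) = 'C(a + b, b))%N.
Proof.
elim: a b => [|a IH] b Hb.
  by case: b Hb => [|[|b]].
elim: b Hb => [|b IHb] Hb; first by rewrite B0 bin0.
case: (leqP b.+1 a.+1) => Hba; last first.
  have -> : b = a.+1 by lia.
  rewrite B_small // add0n.
  rewrite -(bin_sub (n := a.+1 + a.+2) (m := a.+1)); last by lia.
  by congr 'C(_, _); lia.
rewrite B_rec Hba mul1n.
have E1 := IH b.+1 Hba.
have E2 := IHb (ltnW Hb).
have -> : (a.+1 + b.+1 = (a + b.+1).+1)%N by lia.
rewrite (_ : (a.+1 + b = a + b.+1)%N) in E2; last by lia.
rewrite binS.
case: b Hb Hba IHb E1 E2 => [|b] Hb Hba IHb E1 E2.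
  rewrite !bin0 in E1 E2 *; lia.
rewrite (binS (a + b.+2) b); lia.
Qed.

Lemma B_cat n : (B n n * n.+1 = 'C(n.*2, n))%N.
Proof.
case: n => [|n]; first by [].
have H := B_closed (leqW (leqnn n.+1)).
have H2 := mul_bin_left (n.+1 + n.+1) n.
have -> : (n.+1.*2 = n.+1 + n.+1)%N by rewrite -addnn.
have E : (n.+1 + n.+1 - n = n.+2)%N by lia.
rewrite E in H2.
move: H H2; set C1 := 'C(_, n.+1); set C0 := 'C(_, n) => H H2.
have : ((B n.+1 n.+1 + C0) * n.+2 = C1 * n.+2)%N by rewrite H.
rewrite mulnDl (mulnC C0) -H2; nia.
Qed.

Lemma catalanB n : catalan n = (B n n)%:R.
Proof.
rewrite /catalan -B_cat natrM mulfK //.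
by rewrite pnatr_eq0.
Qed.

Lemma char_even n w : size w = (n + n)%N ->
  avoids_all n.+1 w = [&& c1 w == n, c0 w == n & ballot 0 w].
Proof.
rewrite size_c => Hs; apply/idP/idP.
  move=> H; have [h1 h0] := avoids_bounds H.
  have E1 : c1 w = n by lia.
  have E0 : c0 w = n by lia.
  rewrite E1 E0 !eqxx /=; apply: (avoids_ballot (k := n.+1) (d := 0) _).1 H; lia.
move=> /and3P [/eqP E1 /eqP E0 Hb]; apply: (avoids_ballot (k := n.+1) (d := 0) _).2 Hb; lia.
Qed.

Lemma char_odd n w : (0 < n)%N -> size w = (n + n).-1 ->
  avoids_all n.+1 w = [&& c1 w == n, c0 w == n.-1 & ballot 0 w] ||
                      [&& c1 w == n.-1, c0 w == n & ballot 1 w].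
Proof.
rewrite size_c => Hn Hs; apply/idP/idP.
  move=> H; have [h1 h0] := avoids_bounds H.
  case: (eqVneq (c1 w) n) => E1.
    have E0 : c0 w = n.-1 by lia.
    rewrite E1 E0 !eqxx /=; apply/orP; left; apply: (avoids_ballot (k := n.+1) (d := 0) _).1 H; lia.
  have E1' : c1 w = n.-1 by lia.
  have E0 : c0 w = n by lia.
  rewrite E1' E0 !eqxx /=. apply: (avoids_ballot (k := n.+1) (d := 1) _).1 H; lia.
case/orP => /and3P [/eqP E1 /eqP E0 Hb].
  apply: (avoids_ballot (k := n.+1) (d := 0) _).2 Hb; lia.
apply: (avoids_ballot (k := n.+1) (d := 1) _).2 Hb; lia.
Qed.

Lemma Gc_zero_big p q b : (p < q)%N -> Gc 0 p q b = 0%N.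
Proof. move=> H; rewrite Gc_rec; last lia. by rewrite addn0 leqNgt H mul0n. Qed.

Lemma R1 n c : Gc 0 n.+1 n c = Gc 0 n.+1 n.+1 (c (+) odd n.+1).
Proof.
rewrite (@Gc_rec 0 n.+1 n.+1) //; cbv beta iota.
by rewrite (@Gc_zero_big n) // add0n addn0 ltnSn mul1n addbK.
Qed.

Lemma R2 p q b : Gc 1 p q b = Gc 0 p.+1 q (b (+) odd q).
Proof.
rewrite /Gc addSn W_count_cons.
have -> : count (fun w => [&& c1 (false :: w) == p.+1, c0 (false :: w) == q,
    ballot 0 (false :: w) & odd (winv (false :: w)) == b (+) odd q]) (W (p + q)) = 0%N.
  apply/eqP; rewrite -leqn0 leqNgt -has_count; apply/hasPn => w _.
  by rewrite /= !andbF.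
rewrite addn0; apply: eq_count => w.
rewrite /c1 /c0 /= add1n add0n eqSS -/(c1 w) -/(c0 w).
case: (eqVneq (c0 w) q) => [->|]; last by rewrite !andbF.
rewrite oddD; by case: (c1 w == p); case: (ballot 1 w); case: (odd q); case: b; case: (odd (winv w)).
Qed.

Lemma count_or (T : eqType) (a b : pred T) s :
  (forall x, ~~ (a x && b x)) -> count (fun x => a x || b x) s = (count a s + count b s)%N.
Proof.
move=> H; rewrite -count_predUI.
have -> : count (predI a b) s = 0%N.
  apply/eqP; rewrite -leqn0 leqNgt -has_count; apply/hasPn => x _; exact: H.
by rewrite addn0.
Qed.

Lemma cnt_even n b :
  count (fun w => avoids_all n.+1 w && (odd_word w == b)) (W (n + n)) = Gc 0 n n b.
Proof.
rewrite /Gc; apply: eq_in_count => w; rewrite memW => /eqP Hs.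
by rewrite char_even // odd_wordE -!andbA.
Qed.

Lemma cnt_odd n b :
  count (fun w => avoids_all n.+2 w && (odd_word w == b)) (W (n.+1 + n)) =
  (Gc 0 n.+1 n b + Gc 1 n n.+1 b)%N.
Proof.
rewrite /Gc addnC addnS -addSn addnC.
rewrite -count_or; last first.
  by move=> w; apply/negP => /andP [/and4P [/eqP -> _ _ _] /and4P [/eqP H _ _ _]]; lia.
apply: eq_in_count => w; rewrite memW => /eqP Hs.
rewrite char_odd //.
rewrite odd_wordE /=.
by case: (c1 w == n.+1); case: (c0 w == n); case: (c1 w == n); case: (c0 w == n.+1);
  case: (ballot 0 w); case: (ballot 1 w); case: (odd (winv w) == b).
Qed.

Lemma card_tupleA k m :
  #|[set w : m.-tuple bool | avoids_all k w && odd_word w]| =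
  count (fun w => avoids_all k w && (odd_word w == true)) (W m).
Proof.
rewrite (card_tuple (fun w => avoids_all k w && odd_word w)).
by apply: eq_count => w; rewrite eqb_id.
Qed.

Lemma card_tupleB k m :
  #|[set w : m.-tuple bool | avoids_all k w && ~~ odd_word w]| =
  count (fun w => avoids_all k w && (odd_word w == false)) (W m).
Proof.
rewrite (card_tuple (fun w => avoids_all k w && ~~ odd_word w)).
by apply: eq_count => w; rewrite eqbF_neg.
Qed.

Local Close Scope ring_scope.

Theorem proposition4p2 (k : nat) (hk : (2 <= k)%N) :
  ((Ocount k (k.*2 - 2))%:R = (catalan k.-1 + catalan_half_km2 k) / 2 :> rat)%R
  /\ Ocount k (k.*2 - 3) = (2 * Ecount k (k.*2 - 2))%N.
Proof.
case: k hk => [|[|n]] // _.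
have E2 : n.+2.*2 - 2 = n.+1 + n.+1 by rewrite -addnn; lia.
have E3 : n.+2.*2 - 3 = n.+1 + n by rewrite -addnn; lia.
rewrite /Ocount /Ecount E2 E3 !card_tupleA card_tupleB.
rewrite cnt_even cnt_even cnt_odd R1 R2.
have HT := @GT (n.+1 + n.+1) n.+1 n.+1 (leqnn _).
have HD := @GD (n.+1 + n.+1) n.+1 n.+1 (leqnn _).
rewrite !natz in HD.
set Gf := Gc 0 n.+1 n.+1 false in HT HD *.
set Gt := Gc 0 n.+1 n.+1 true in HT HD *.
rewrite /catalan_half_km2 !catalanB.
set Bn := B n.+1 n.+1 in HT *.
case: (psplit n.+1) => [//|[a [Ha|Ha]]].
-
  have Hn : n = a.*2 by lia.
  rewrite Ha Dcl_o1 natz in HD.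
  have Hodd1 : odd n.+1 = true by rewrite Ha /= odd_double.
  have Hodd2 : odd n.+2 = false by rewrite Hn /= odd_double.
  rewrite Hodd1 Hodd2 /= -/Gf; split; last by rewrite addnn -mul2n.
  have -> : (n.+2 - 2)./2 = a by rewrite Hn subn2 /= half_dbl.
  have HH : (Gt + Gt = Bn + B a a)%N by lia.
  have -> : ((Bn%:R + (B a a)%:R : rat) = ((Gt + Gt)%N%:R))%R by rewrite HH natrD.
  by rewrite natrD; field.
-
  have Hodd1 : odd n.+1 = false by rewrite Ha /= odd_double.
  have Hodd2 : odd n.+2 = true by rewrite (_ : odd n.+2 = ~~ odd n.+1) // Hodd1.
  have Hc : (a.*2.+2 = a.+1.*2)%N by rewrite doubleS.
  rewrite Ha Hc Dcl_e0 B_small // in HD.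
  have HH : Gt = Gf by lia.
  rewrite Hodd1 Hodd2 /= -/Gt HH; split; last by rewrite addnn -mul2n.
  have -> : Bn = (Gf + Gf)%N by rewrite -HT HH.
  by rewrite natrD addr0; field.
Qed.
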